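(* Let $1\le k\le n$ and let $Y$ be a Young diagram of shape $\lambda=(\lambda_1,\ldots,\lambda_k)$ contained in the $k\times(n-k)$ rectangle, justified to the northwest. There is a bijection from the set of Catalan paths of size $(n,k)$ constrained by $Y$ to the set of Catalan tableaux of size $(n,k)$ whose Young diagram is $Y$ (equivalently, of type $\tau$ with $\lambda(\tau)=\lambda$), and this bijection preserves weight: if the Catalan path $C$ maps to the tableau $T$, then $\mathrm{wt}(C)=\mathrm{wt}(T)$.
   Context: Coordinates: label the vertical grid lines of the $k\times(n-k)$ rectangle $0,1,\ldots,n-k$ from left to right; rows are numbered $1,\ldots,k$ from top to bottom; row $i$ of $Y$ consists of the leftmost $\lambda_i$ boxes, $n-k\ge\lambda_1\ge\cdots\ge\lambda_k\ge0$. Let $L$ be the lattice path from the northeast corner to the southwest corner of the rectangle, using south and west unit steps, that follows the southeast border of $Y$. Catalan path: a lattice path from the northeast corner to the southwest corner of the rectangle using unit south and west steps that never crosses the southeast border of $Y$ (i.e. stays weakly inside $Y$ together with its boundary). Equivalently it is described by $(C_1,\ldots,C_k)$ with $C_1\ge\cdots\ge C_k\ge0$ and $C_i\le\lambda_i$, where $C_i$ is the label of the vertical grid line on which the path's south step in row $i$ lies. Edge weights: a south step lying on the west border of the rectangle (i.e. $C_i=0$) has weight $1/\beta$; any other south step has weight $1$; a west step lying on $L$ has weight $1/\alpha$; any other west step has weight $1$. The path weight $\mathrm{pwt}(C)$ is the product of the edge weights and $\mathrm{wt}(C)=(\alpha\beta)^n\,\mathrm{pwt}(C)$. Catalan tableau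 of size $(n,k)$ with Young diagram $Y$: a filling of the boxes of $Y$ with $\alpha$'s and $\beta$'s (at most one per box) such that (i) every box in the same column and above an $\alpha$ is empty; (ii) every box in the same row and left of a $\beta$ is empty; (iii) every box not above an $\alpha$ and not left of a $\beta$ contains an $\alpha$ or a $\beta$. Its type is the word read along $L$ from northeast to southwest ($1$ for south, $0$ for west steps); $\lambda(\tau)_i$ is the number of $0$'s after the $i$-th $1$ of $\tau$. Its weight is $\mathrm{wt}(T)=(\alpha\beta)^n(1/\alpha)^{f_{\mathrm{col}}(T)}(1/\beta)^{f_{\mathrm{row}}(T)}$, where $f_{\mathrm{col}}(T)$ is the number of columns of the rectangle containing no $\alpha$ and $f_{\mathrm{row}}(T)$ the number of rows of the rectangle containing no $\beta$. *)

(* Defs.v *)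
From HB Require Import structures.
From mathcomp Require Import all_boot all_order all_algebra.
Unset Printing Implicit Defensive.
Import GRing.Theory.

(* Conventions:
   - n, k : sizes, rectangle k x (n-k); rows 'I_k (row i+1 of the paper is
     index i), columns 'I_(n-k) (column j of boxes lies between vertical
     grid lines j and j+1).
   - lam : nat -> nat, lam i = lambda_{i+1} for i < k.
   - A Catalan path is C : {ffun 'I_k -> 'I_(n-k).+1}, C i = C_{i+1}
     (label of the vertical grid line of the south step in row i+1).
   - Fillings: {ffun 'I_k * 'I_(n-k) -> option bool}:
     None = empty, Some true = alpha, Some false = beta. *)

Section Defs.
Variables (n k : nat) (lam : nat -> nat).

Definition young_shape : Prop :=
  (forall i, i < k -> lam i <= n - k) /\
  (forall i j, i <= j -> j < k -> lam j <= lam i).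

Definition catalan_path (C : {ffun 'I_k -> 'I_(n - k).+1}) : bool :=
  [forall i : 'I_k, (C i <= lam i)%N] &&
  [forall i : 'I_k, forall j : 'I_k, (i <= j)%N ==> (C j <= C i)%N].

(* extended lambda on horizontal grid lines h = 0..k+1 (1-indexed parts):
   lamx 0 = n-k, lamx h = lambda_h for 1<=h<=k, lamx (k+1) = 0 *)
Definition lamx (h : nat) : nat :=
  if h == 0 then n - k else if h <= k then lam h.-1 else 0.

(* extended path: Cx 0 = n-k, Cx h = C_h for 1<=h<=k, Cx (k+1) = 0 *)
Definition Cx (C : {ffun 'I_k -> 'I_(n - k).+1}) (h : nat) : nat :=
  if h == 0 then n - k else
  if @insub _ (fun m => m < k) 'I_k h.-1 is Some i then (C i : nat) else 0.

(* The west steps on horizontal grid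
   line h (h = 0..k) are the unit segments [x-1,x] with Cx (h+1) < x <= Cx h;
   L contains the segment [x-1,x] on line h iff lamx (h+1) < x <= lamx h. *)
Definition west_on_L (C : {ffun 'I_k -> 'I_(n - k).+1}) : nat :=
  \sum_(0 <= h < k.+1)
    #|[set x : 'I_(n - k).+1 |
        [&& Cx C h.+1 < x, x <= Cx C h, lamx h.+1 < x & x <= lamx h]]|.

Definition south_on_west (C : {ffun 'I_k -> 'I_(n - k).+1}) : nat :=
  #|[set i : 'I_k | (C i : nat) == 0]|.

Definition path_wt (R : fieldType) (a b : R)
    (C : {ffun 'I_k -> 'I_(n - k).+1}) : R :=
  (a * b) ^+ n * (a^-1) ^+ west_on_L C * (b^-1) ^+ south_on_west C.

Definition inY (c : 'I_k * 'I_(n - k)) : bool := (c.2 < lam c.1)%N.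

Definition catalan_tableau (T : {ffun 'I_k * 'I_(n - k) -> option bool}) : bool :=
  [forall c, ~~ inY c ==> (T c == None)] &&
  [forall i : 'I_k, forall j : 'I_(n - k), forall i' : 'I_k,
     ((T (i, j) == Some true) && (i' < i)%N) ==> (T (i', j) == None)] &&
  [forall i : 'I_k, forall j : 'I_(n - k), forall j' : 'I_(n - k),
     ((T (i, j) == Some false) && (j' < j)%N) ==> (T (i, j') == None)] &&
  [forall i : 'I_k, forall j : 'I_(n - k),
     [&& inY (i, j),
         [forall i' : 'I_k, (i < i')%N ==> (T (i', j) != Some true)] &
         [forall j' : 'I_(n - k), (j < j')%N ==> (T (i, j') != Some false)]]
     ==> (T (i, j) != None)].

Definition f_col (T : {ffun 'I_k * 'I_(n - k) -> option bool}) : nat :=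
  #|[set j : 'I_(n - k) | [forall i : 'I_k, T (i, j) != Some true]]|.
Definition f_row (T : {ffun 'I_k * 'I_(n - k) -> option bool}) : nat :=
  #|[set i : 'I_k | [forall j : 'I_(n - k), T (i, j) != Some false]]|.

Definition tab_wt (R : fieldType) (a b : R)
    (T : {ffun 'I_k * 'I_(n - k) -> option bool}) : R :=
  (a * b) ^+ n * (a^-1) ^+ f_col T * (b^-1) ^+ f_row T.

End Defs.

(* Main.v *)
Require Import Defs.
From HB Require Import structures.
From mathcomp Require Import all_boot all_order all_algebra.
From mathcomp Require Import zify.
From Stdlib Require Import FunctionalExtensionality.

Lemma iotaS0 n : iota 0 n.+1 = iota 0 n ++ [:: n].
Proof. by rewrite -addn1 iotaD. Qed.

Lemma countS0 (P : pred nat) n : count P (iota 0 n.+1) = count P (iota 0 n) + P n.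
Proof. by rewrite iotaS0 count_cat /= addn0. Qed.

Lemma count_split {T : Type} (a b : pred T) (s : seq T) :
  count a s = count (fun x => a x && b x) s + count (fun x => a x && ~~ b x) s.
Proof. elim: s => //= x s ->; case: (a x); case: (b x) => /=; lia. Qed.

Lemma count_or {T : Type} (a b : pred T) (s : seq T) :
  (forall x, ~~ (a x && b x)) ->
  count (fun x => a x || b x) s = count a s + count b s.
Proof. move=> H; elim: s => //= x s ->; move: (H x); case: (a x); case: (b x) => /=; lia. Qed.



Lemma count_rk_le (P : pred nat) m n :
  count (fun i => P i && (count P (iota 0 i.+1) <= m)) (iota 0 n)
  = minn m (count P (iota 0 n)).
Proof.
elim: n => [|n IH]; first by rewrite /= minn0.
have E : count P (iota 0 n.+1) = count P (iota 0 n) + P n.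
  by rewrite iotaS0 count_cat /= addn0.
have F : count (fun i => P i && (count P (iota 0 i.+1) <= m)) [:: n] = P n && (count P (iota 0 n.+1) <= m) by rewrite /= addn0.
rewrite iotaS0 !count_cat IH F E [count P [:: n]]/= addn0.
case: (P n) => /=; lia.
Qed.

Lemma rk_mono (P : pred nat) {i j} : i <= j ->
  count P (iota 0 i) <= count P (iota 0 j).
Proof.
move=> H; rewrite -(subnKC H) iotaD count_cat; lia.
Qed.

Lemma rk_lt (P : pred nat) {i j} : i < j -> P j ->
  count P (iota 0 i.+1) < count P (iota 0 j.+1).
Proof.
move=> H Pj; rewrite [X in _ < X]countS0 Pj.
have := rk_mono P H; lia.
Qed.

Lemma rk_pos {P : pred nat} {i} : P i -> 0 < count P (iota 0 i.+1).
Proof. by move=> Pi; rewrite countS0 Pi; lia. Qed.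

Lemma rk_exists (P : pred nat) {m n} : 0 < m -> m <= count P (iota 0 n) ->
  exists j, [/\ j < n, P j & count P (iota 0 j.+1) = m].
Proof.
move=> m0; elim: n => [|n IH]; first by rewrite /=; lia.
case: (leqP m (count P (iota 0 n))) => [/IH [j [jn Pj Hj]] _|Hlt].
  by exists j; split => //; lia.
rewrite countS0 => Hle.
have Pn : P n by move: Hle Hlt; case: (P n) => /=; lia.
exists n; split => //; rewrite countS0 Pn; move: Hle Hlt; rewrite Pn /=; lia.
Qed.

Lemma count_prefix (p : pred nat) k j :
  (forall i j, i <= j -> j < k -> p j -> p i) -> j < k ->
  p j = (j < count p (iota 0 k)).
Proof.
elim: k j => [|k IH] j Hp Hj //.
rewrite countS0.
case Pk: (p k).
- have -> : count p (iota 0 k) = k.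
    have: forall i, i < k -> p i by move=> i Hi; apply: (Hp i k) => //; lia.
    move=> H; rewrite (eq_in_count (a2:=predT)); first by rewrite count_predT size_iota.
    by move=> i; rewrite mem_iota => /andP[_ Hi]; rewrite H.
  rewrite (Hp j k) //; try lia.
- case: (ltngtP j k) => [Hjk||]; try lia.
  + rewrite IH //; first lia.
    by move=> i l Hil Hl; apply: Hp; lia.
  + move=> ->; rewrite Pk; have := count_size p (iota 0 k); rewrite size_iota; lia.
Qed.

Lemma count_lt_iota c N : count (fun x => x < c) (iota 0 N) = minn c N.
Proof. elim: N => [|N IH]; first by rewrite /= minn0. rewrite countS0 IH /=; lia. Qed.

Lemma card_ord_count k (P : pred nat) : #|[set i : 'I_k | P i]| = count P (iota 0 k).
Proof. by rewrite cardsE cardE /enum_mem size_filter -enumT -val_enum_ord count_map. Qed.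

Lemma count_le_prefix (P : pred nat) a k : a < k ->
  count (fun i => P i && (i <= a)) (iota 0 k) = count P (iota 0 a.+1).
Proof.
move=> ak; rewrite -(subnKC ak) iotaD count_cat.
rewrite (eq_in_count (a1 := fun i => P i && (i <= a)) (a2 := P)); last first.
  by move=> i; rewrite mem_iota => /andP[_ H]; rewrite (_ : i <= a) ?andbT //; lia.
rewrite (eq_in_count (a1 := fun i => P i && (i <= a)) (a2 := pred0) (s := iota _ _)).
  by rewrite count_pred0 addn0.
by move=> i; rewrite mem_iota => /andP[H _]; rewrite (_ : i <= a = false) ?andbF //; lia.
Qed.

Lemma rk_ltE (P : pred nat) i a : P i -> P a ->
  (count P (iota 0 i.+1) < count P (iota 0 a.+1)) = (i < a).
Proof.
move=> Pi Pa; case: (ltnP i a) => H; first by rewrite (rk_lt _ H Pa).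
by apply/negbTE; rewrite -leqNgt; apply: rk_mono.
Qed.

Lemma rk_eqE (P : pred nat) i a : P i -> P a ->
  (count P (iota 0 i.+1) == count P (iota 0 a.+1)) = (i == a).
Proof.
move=> Pi Pa; case: (ltngtP i a) => H.
- by have := rk_lt P H Pa; lia.
- by have := rk_lt P H Pi; lia.
- by rewrite H eqxx.
Qed.

Lemma xd N x : x < N -> N - (N - x.+1).+1 = x.
Proof. lia. Qed.
Section Constr.
Variables (N k : nat) (lam : nat -> nat) (e : nat -> nat).

Definition lamc x := count (fun i => x < lam i) (iota 0 k).
Definition mm d := lamc (N - d.+1) - e (N - d.+1).

Fixpoint K (d : nat) : nat -> bool :=
  if d is d'.+1 then
    fun i => K d' i || ([&& i < k, N - d'.+1 < lam i & ~~ K d' i] &&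
       (mm d' < count (fun j => [&& j < k, N - d'.+1 < lam j & ~~ K d' j]) (iota 0 i.+1)))
  else fun _ => false.

Definition inU d i := [&& i < k, N - d.+1 < lam i & ~~ K d i].
Definition rk d i := count (inU d) (iota 0 i.+1).

Lemma KS d i : K d.+1 i = K d i || inU d i && (mm d < rk d i).
Proof. by []. Qed.

Definition cell d i :=
  if inU d i then (if rk d i < mm d then None else Some (rk d i == mm d)) else None.
Definition tabn i x := cell (N - x.+1) i.

Lemma cell_alpha d i : (cell d i == Some true) = inU d i && (rk d i == mm d).
Proof. rewrite /cell; case: (inU d i) => //; case: ltngtP => //. Qed.

Lemma cell_beta d i : (cell d i == Some false) = inU d i && (mm d < rk d i).
Proof. rewrite /cell; case: (inU d i) => //; case: ltngtP => //. Qed.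

Lemma cell_inU d i : cell d i != None -> inU d i.
Proof. by rewrite /cell; case: (inU d i). Qed.

Lemma K_sub d i : K d i -> (i < k) && (N - d < lam i).
Proof.
elim: d => [|d IH] //; rewrite KS; case/orP => [/IH|].
  by case/andP => -> H /=; apply: leq_ltn_trans H; lia.
by rewrite /inU => /andP[/and3P[-> H _] _].
Qed.

Lemma K_mono {d d' i} : d <= d' -> K d i -> K d' i.
Proof.
elim: d' => [|d' IH] Hd; first by move: Hd; rewrite leqn0 => /eqP ->.
case: (ltngtP d d'.+1) Hd => // [Hlt _|-> _ //] Kd.
by rewrite KS IH.
Qed.

Lemma beta_K {d i} : cell d i = Some false -> K d.+1 i.
Proof. by move/eqP; rewrite cell_beta KS => ->; rewrite orbT. Qed.

Lemma K_beta {d i} : K d i -> exists d0, d0 < d /\ cell d0 i = Some false.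
Proof.
elim: d => [|d IH] //; rewrite KS; case/orP => [/IH [d0 [H1 H2]]|H].
  by exists d0; split => //; lia.
by exists d; split => //; apply/eqP; rewrite cell_beta.
Qed.

Hypothesis He : forall x, e x.+1 <= e x.
Hypothesis HeN : e N = 0.
Hypothesis Hel : forall x, x < N -> e x <= lamc x.

Lemma U_card_aux d : d < N -> count (K d) (iota 0 k) = e (N - d) ->
  count (inU d) (iota 0 k) = lamc (N - d.+1) - e (N - d).
Proof.
move=> dN HK.
rewrite /lamc [count (fun i => _ < lam i) _](count_split _ (K d)) -HK.
have -> : count (fun i => (N - d.+1 < lam i) && K d i) (iota 0 k) = count (K d) (iota 0 k).
  apply: eq_in_count => i; rewrite mem_iota => /andP[_ ik].
  case Kd: (K d i); rewrite ?andbF ?andbT //.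
  by move/K_sub: Kd => /andP[_ H]; apply: leq_ltn_trans H; lia.
rewrite addKn; apply: eq_in_count => i; rewrite mem_iota => /andP[_ ik].
by rewrite /inU ik.
Qed.

Lemma K_card d : d <= N -> count (K d) (iota 0 k) = e (N - d).
Proof.
elim: d => [|d IH] dN; first by rewrite subn0 HeN; elim: (iota 0 k).
have HK := IH (ltnW dN).
have HU := U_card_aux d dN HK.
rewrite (eq_count (KS d)) count_or; last first.
  by move=> i; rewrite /inU; case: (K d i); rewrite ?andbF.
have E1 := count_rk_le (inU d) (mm d) k.
have E2 := count_split (inU d) (fun i => count (inU d) (iota 0 i.+1) <= mm d) (iota 0 k).
have E3 : count (fun i => inU d i && (mm d < rk d i)) (iota 0 k) =
   count (fun i => inU d i && ~~ (count (inU d) (iota 0 i.+1) <= mm d)) (iota 0 k).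
  by apply: eq_count => i; rewrite ltnNge.
rewrite E3 HK.
have Hx : N - d = (N - d.+1).+1 by lia.
move: HU E1 E2; rewrite /mm Hx => HU E1 E2.
have := He (N - d.+1); have := Hel (N - d.+1).
have : N - d.+1 < N by lia.
move=> h1 /(_ h1) h2 h3.
lia.
Qed.

Lemma U_card d : d < N ->
  count (inU d) (iota 0 k) = lamc (N - d.+1) - e (N - d).
Proof. by move=> dN; apply: U_card_aux => //; apply: K_card; lia. Qed.

Lemma mm_le d : d < N -> mm d <= count (inU d) (iota 0 k).
Proof.
move=> dN; rewrite U_card // /mm.
have Hx : N - d = (N - d.+1).+1 by lia.
rewrite Hx; have := He (N - d.+1); lia.
Qed.


Lemma tabn_Y i x : x < N -> ~~ (x < lam i) -> tabn i x = None.
Proof.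
move=> xN H; rewrite /tabn /cell /inU xd //.
by rewrite (negbTE H) andbF.
Qed.

Lemma tabn_i i i' x : tabn i x = Some true -> i' < i -> tabn i' x = None.
Proof.
rewrite /tabn => /eqP; rewrite cell_alpha => /andP[Ui /eqP Hr] Hii'.
rewrite /cell; case Ui': (inU _ i') => //.
by rewrite -Hr /rk (rk_lt _ Hii' Ui).
Qed.

Lemma tabn_ii i x x' : x < N -> tabn i x = Some false -> x' < x -> tabn i x' = None.
Proof.
rewrite /tabn => xN /beta_K HK Hx'.
have : K (N - x'.+1) i by apply: (K_mono _ HK); lia.
by rewrite /cell /inU => ->; rewrite !andbF.
Qed.

Lemma tabn_iii i x : i < k -> x < N -> x < lam i ->
  (forall i', i < i' -> i' < k -> tabn i' x != Some true) ->
  (forall x', x < x' -> x' < N -> tabn i x' != Some false) ->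
  tabn i x != None.
Proof.
move=> ik xN xl Ha Hb.
set d := N - x.+1.
case Kd: (K d i).
  case: (K_beta Kd) => d0 [d0d Hc].
  rewrite /d in d0d.
  have H1 : x < N - d0.+1 by lia.
  have H2 : N - d0.+1 < N by lia.
  have := Hb _ H1 H2; rewrite /tabn (_ : N - (N - d0.+1).+1 = d0) ?Hc //; lia.
have Ui : inU d i by rewrite /inU ik /d xd // xl Kd.
rewrite /tabn -/d /cell Ui.
case: ltnP => // Hlt.
have dN : d < N by rewrite /d; lia.
have [j [jk Uj Hj]] := rk_exists (inU d) (n:=k) (ltn_trans (rk_pos Ui) Hlt) (mm_le d dN).
have ij : i < j.
  case: (ltnP i j) => // ji.
  have := rk_mono (inU d) (ji : j.+1 <= i.+1); rewrite Hj -/(rk d i); lia.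
have := Ha j ij jk; rewrite /tabn -/d => /negP H; exfalso; apply: H.
by rewrite cell_alpha Uj /rk Hj eqxx.
Qed.

Lemma beta_range i x : x <= N ->
  (exists y, [/\ x <= y, y < N & tabn i y = Some false]) <-> K (N - x) i.
Proof.
move=> xN; split.
  move=> [y [xy yN]]; rewrite /tabn => /beta_K HK.
  by apply: (K_mono _ HK); lia.
case/K_beta => d0 [d0x Hc]; exists (N - d0.+1); split; try lia.
by rewrite /tabn; have -> : N - (N - d0.+1).+1 = d0 by lia.
Qed.

Lemma beta_count x : x <= N ->
  count (fun i => has (fun y => (x <= y) && (tabn i y == Some false)) (iota 0 N)) (iota 0 k)
  = e x.
Proof.
move=> xN; rewrite -[in RHS](_ : N - (N - x) = x); last lia.
rewrite -K_card; last lia.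
apply: eq_count => i; apply/idP/idP.
  case/hasP => y; rewrite mem_iota => /andP[_ yN] /andP[xy /eqP H].
  by apply/(beta_range i x xN); exists y.
case/(beta_range i x xN) => y [xy yN H]; apply/hasP; exists y.
  by rewrite mem_iota; lia.
by rewrite xy H eqxx.
Qed.

Lemma col_alpha x : x < N ->
  (exists i, i < k /\ tabn i x = Some true) <-> e x < lamc x.
Proof.
move=> xN; set d := N - x.+1.
have dN : d < N by rewrite /d; lia.
have Hm : mm d = lamc x - e x by rewrite /mm /d xd //.
split.
  case=> i [ik]; rewrite /tabn -/d => /eqP; rewrite cell_alpha => /andP[Ui /eqP Hr].
  have := rk_pos Ui; rewrite -/(rk d i) Hr Hm; lia.
move=> Hlt.
have m0 : 0 < mm d by rewrite Hm; lia.
have [j [jk Uj Hj]] := rk_exists (inU d) (n:=k) m0 (mm_le d dN).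
by exists j; split => //; rewrite /tabn -/d; apply/eqP; rewrite cell_alpha Uj /rk Hj eqxx.
Qed.

End Constr.

Section Uniq.
Variables (N k : nat) (lam : nat -> nat) (T : nat -> nat -> option bool).
Hypothesis TY : forall i x, ~~ [&& i < k, x < N & x < lam i] -> T i x = None.
Hypothesis Ti : forall i i' x, T i x = Some true -> i' < i -> T i' x = None.
Hypothesis Tii : forall i x x', T i x = Some false -> x' < x -> T i x' = None.
Hypothesis Tiii : forall i x, i < k -> x < N -> x < lam i ->
  (forall i', i < i' -> T i' x != Some true) ->
  (forall x', x < x' -> T i x' != Some false) -> T i x != None.

Definition KTx x i := has (fun y => (x <= y) && (T i y == Some false)) (iota 0 N).
Definition eT x := count (KTx x) (iota 0 k).

Lemma filled i x : T i x != None -> [&& i < k, x < N & x < lam i].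
Proof. by apply: contraR => /TY ->. Qed.

Lemma eT_dec x : eT x.+1 <= eT x.
Proof.
apply: sub_count => i /hasP [y Hy /andP[H1 H2]]; apply/hasP; exists y => //.
by rewrite H2 andbT; lia.
Qed.

Lemma eT_N : eT N = 0.
Proof.
rewrite /eT (eq_count (a2 := pred0)) ?count_pred0 // => i.
apply/negbTE/hasPn => y; rewrite mem_iota => /andP[_ H]; rewrite negb_and; lia.
Qed.

Lemma eT_le x : x < N -> eT x <= lamc k lam x.
Proof.
move=> xN; apply: sub_count => i /hasP [y _ /andP[H1 /eqP H2]].
have : T i y != None by rewrite H2.
by case/filled/and3P => _ _ H; lia.
Qed.

Lemma KTx_S x i : x < N -> KTx x i = KTx x.+1 i || (T i x == Some false).
Proof.
move=> xN; apply/idP/idP.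
  case/hasP => y; rewrite mem_iota => /andP[_ yN] /andP[xy H].
  case: (ltngtP x y) => [xy'|yx|E]; last by rewrite E H orbT.
    by apply/orP; left; apply/hasP; exists y; rewrite ?mem_iota ?xy' ?H //; lia.
  lia.
case/orP => [/hasP [y Hy /andP[H1 H2]]|H]; apply/hasP.
  by exists y => //; rewrite H2 andbT; lia.
by exists x; rewrite ?mem_iota ?leqnn ?H //; lia.
Qed.

Local Notation KK := (K N k lam eT).
Local Notation UU := (inU N k lam eT).
Local Notation cc := (cell N k lam eT).
Local Notation rr := (rk N k lam eT).
Local Notation mmm := (mm N k lam eT).

Lemma U1 d : d < N -> (forall i, KK d i = KTx (N - d) i) ->
  forall i, cc d i = T i (N - d.+1).
Proof.
move=> dN HK.
set x := N - d.+1.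
have Hx : N - d = x.+1 by rewrite /x; lia.
have xN : x < N by rewrite /x; lia.
rewrite Hx in HK.
have UE : forall i, UU d i = [&& i < k, x < lam i & ~~ KTx x.+1 i].
  by move=> i; rewrite /inU HK.
have F2 : forall i, KTx x.+1 i -> T i x = None.
  move=> i /hasP [y _ /andP[H1 /eqP H2]]; exact: (Tii _ _ _ H2).
have Fi : forall i, T i x != None -> UU d i.
  move=> i H; rewrite UE; case/filled/and3P: (H) => -> _ -> /=.
  by apply/negP => /F2 E; rewrite E in H.
have F3 : forall i, UU d i -> (forall i', i < i' -> T i' x != Some true) -> T i x != None.
  move=> i; rewrite UE => /and3P [ik xl nK] Ha.
  apply: Tiii => // x' xx'.
  case: (ltnP x' N) => x'N.
    apply/negP => /eqP H; move/negP: nK; apply; apply/hasP; exists x'.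
      by rewrite mem_iota; lia.
    by rewrite xx' H eqxx.
  by rewrite TY //; rewrite negb_and; apply/orP; right; rewrite negb_and; apply/orP; left; lia.
have HeT : eT x = eT x.+1 + count (fun i => T i x == Some false) (iota 0 k).
  rewrite /eT (eq_count (fun i => KTx_S x i xN)) count_or // => i.
  by apply/negP => /andP[/F2 ->].
have HU : count (UU d) (iota 0 k) = lamc k lam x - eT x.+1.
  rewrite -Hx; apply: U_card => //; [exact: eT_dec|exact: eT_N|exact: eT_le].
have eTl : eT x.+1 <= lamc k lam x := leq_trans (eT_dec x) (eT_le x xN).
have Hm : mmm d = lamc k lam x - eT x by rewrite /mm.
case: (boolP (has (fun a => T a x == Some true) (iota 0 k))).
  case/hasP => a; rewrite mem_iota => /andP[_ ak] /eqP Ta.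
  have Ua : UU d a by apply: Fi; rewrite Ta.
  have colT : forall i, T i x = if UU d i then (if i < a then None else
       if i == a then Some true else Some false) else None.
    move=> i; case Ui: (UU d i); last first.
      by apply/eqP; apply: contraFT Ui => /Fi.
    case: ltngtP => [ia|ai|->//]; first exact: (Ti _ _ _ Ta).
    have Hn : T i x != None.
      apply: F3 => // i' ii'; apply/negP => /eqP Ti'.
      by have := Ti _ _ _ Ti' (ltn_trans ai ii'); rewrite Ta.
    case E: (T i x) Hn => [[]|] // _.
    by have := Ti _ _ _ E ai; rewrite Ta.
  have cB : count (fun i => T i x == Some false) (iota 0 k) =
            count (fun i => UU d i && ~~ (i <= a)) (iota 0 k).
    apply: eq_count => i; rewrite colT; case: (UU d i) => //.
    by case: ltngtP.
  have Hsp := count_split (UU d) (fun i => i <= a) (iota 0 k).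
  rewrite count_le_prefix // -cB HU in Hsp.
  have Hm' : mmm d = rr d a.
    rewrite Hm HeT /rk. move: Hsp; have := eTl; lia.
  move=> i; rewrite colT /cell Hm'; case Ui: (UU d i) => //.
  rewrite /rk rk_ltE // rk_eqE //; by case: (i < a) => //; case: (i == a).
move=> Hno.
have colT : forall i, T i x = if UU d i then Some false else None.
  move=> i; case Ui: (UU d i); last first.
    by apply/eqP; apply: contraFT Ui => /Fi.
  have Hna : forall i', T i' x != Some true.
    move=> i'; apply/negP => /eqP H.
    have : T i' x != None by rewrite H.
    case/filled/and3P => i'k _ _.
    by move/hasPn: Hno => /(_ i'); rewrite mem_iota i'k H eqxx => /(_ isT).
  have := F3 _ Ui (fun i' _ => Hna i').
  by case E: (T i x) (Hna i) => [[]|].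
have cB : count (fun i => T i x == Some false) (iota 0 k) = count (UU d) (iota 0 k).
  by apply: eq_count => i; rewrite colT; case: (UU d i).
have Hm0 : mmm d = 0 by rewrite Hm HeT cB HU; have := eTl; lia.
move=> i; rewrite colT /cell Hm0; case Ui: (UU d i) => //.
by have := @rk_pos _ _ Ui; rewrite -/(rk _ _ _ _ d i); case: (rr d i).
Qed.

Lemma U2 d : d <= N -> forall i, KK d i = KTx (N - d) i.
Proof.
elim: d => [|d IH] dN i.
  rewrite subn0 /=; apply/esym/negbTE/hasPn => y; rewrite mem_iota; lia.
have HK := IH (ltnW dN).
rewrite KS -cell_beta U1 // HK.
have Hx : N - d = (N - d.+1).+1 by lia.
rewrite Hx -KTx_S //. lia.
Qed.

Lemma T_tabn i x : x < N -> T i x = tabn N k lam eT i x.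
Proof.
move=> xN; have dN : N - x.+1 < N by lia.
rewrite /tabn (U1 _ dN) ; first by rewrite xd.
by move=> j; apply: U2; lia.
Qed.

End Uniq.

Lemma count_sum (P : pred nat) m : count P (iota 0 m) = \sum_(0 <= X < m) (P X : nat).
Proof.
elim: m => [|m IH]; first by rewrite big_geq.
by rewrite countS0 big_nat_recr //= IH.
Qed.

Lemma sum_eq1 (c : nat -> bool) a m :
  \sum_(0 <= h < m) ((h == a) && c h : nat) = if a < m then c a : nat else 0.
Proof.
elim: m => [|m IH]; first by rewrite big_geq.
rewrite big_nat_recr //= IH.
case: (ltngtP a m) => [am|ma|->].
- rewrite (_ : a < m.+1) ?(_ : (m == a) = false) ?addn0 //; lia.
- rewrite (_ : a < m.+1 = false) ?(_ : (m == a) = false) //; lia.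
- by rewrite ltnSn.
Qed.

Section Final.
Variables (n k : nat) (lam : nat -> nat).
Local Notation N := (n - k).
Hypothesis Hlam : forall i j, i <= j -> j < k -> lam j <= lam i.

Definition cn (C : {ffun 'I_k -> 'I_N.+1}) (i : nat) : nat :=
  if @insub _ (fun m => m < k) 'I_k i is Some i' then (C i' : nat) else 0.

Lemma cn_val C (i : 'I_k) : cn C i = C i.
Proof. by rewrite /cn valK. Qed.

Lemma cn_ge C i : k <= i -> cn C i = 0.
Proof. by move=> ki; rewrite /cn insubF //; apply/negbTE; rewrite -leqNgt. Qed.

Lemma cn_N C i : cn C i <= N.
Proof. rewrite /cn; case: insub => // i'; have := ltn_ord (C i'); lia. Qed.

Definition hn C x := count (fun i => x < cn C i) (iota 0 k).

Section Path.
Variable C : {ffun 'I_k -> 'I_N.+1}.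
Hypothesis HC : catalan_path n k lam C.

Lemma cn_lam {i} : i < k -> cn C i <= lam i.
Proof.
case/andP: HC => /forallP H1 _ ik.
by have := H1 (Ordinal ik); rewrite -cn_val.
Qed.

Lemma cn_dec {i j} : i <= j -> j < k -> cn C j <= cn C i.
Proof.
case/andP: HC => _ /forallP H2 ij jk.
have ik : i < k by lia.
have := H2 (Ordinal ik) => /forallP /(_ (Ordinal jk)) /implyP /(_ ij).
by rewrite -!cn_val.
Qed.

Lemma hn_dec x : hn C x.+1 <= hn C x.
Proof. by apply: sub_count => i /=; lia. Qed.

Lemma hn_N : hn C N = 0.
Proof.
rewrite /hn (eq_count (a2 := pred0)) ?count_pred0 // => i /=.
by have := cn_N C i; lia.
Qed.

Lemma hn_le x : hn C x <= lamc k lam x.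
Proof.
apply: sub_count => i /= H.
case: (ltnP i k) => ik; first by have := cn_lam ik; lia.
by move: H; rewrite cn_ge.
Qed.

Lemma hn_prefix x i : i < k -> (x < cn C i) = (i < hn C x).
Proof.
move=> ik; apply: (count_prefix (fun j => x < cn C j)) => // i' j ij jk /= H.
by have := cn_dec ij jk; lia.
Qed.

Lemma hn_lek x : hn C x <= k.
Proof. by have := count_size (fun i => x < cn C i) (iota 0 k); rewrite size_iota. Qed.

End Path.

Definition fT C : {ffun 'I_k * 'I_N -> option bool} :=
  [ffun c : 'I_k * 'I_N => tabn N k lam (hn C) c.1 c.2].

Lemma fT_tab C : catalan_path n k lam C -> catalan_tableau n k lam (fT C).
Proof.
move=> HC.
have He := hn_dec C HC; have HeN := hn_N C HC; have Hel : forall x, x < N -> hn C x <= lamc k lam x.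
  by move=> x _; apply: hn_le.
rewrite /catalan_tableau; apply/andP; split; [apply/andP; split; [apply/andP; split|]|].
- apply/forallP => -[i x]; apply/implyP; rewrite /inY /= => H; rewrite ffunE /=.
  by apply/eqP; apply: tabn_Y.
- apply/forallP => i; apply/forallP => x; apply/forallP => i'; apply/implyP.
  rewrite !ffunE /= => /andP[/eqP H1 H2]; apply/eqP.
  exact: (tabn_i _ _ _ _ _ _ _ H1 H2).
- apply/forallP => i; apply/forallP => x; apply/forallP => x'; apply/implyP.
  rewrite !ffunE /= => /andP[/eqP H1 H2]; apply/eqP.
  exact: (tabn_ii _ _ _ _ HeN _ _ _ (ltn_ord x) H1 H2).
- apply/forallP => i; apply/forallP => x; apply/implyP.
  case/and3P => Hy /forallP Ha /forallP Hb; rewrite ffunE /=.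
  apply: (tabn_iii _ _ _ _ He HeN Hel) => //.
  + move=> i' ii' i'k; have := Ha (Ordinal i'k); rewrite ffunE /= => /implyP; exact.
  + move=> x' xx' x'N; have := Hb (Ordinal x'N); rewrite ffunE /= => /implyP; exact.
Qed.


Lemma south_eq C : south_on_west n k C = k - hn C 0.
Proof.
rewrite /south_on_west (_ : #|_| = count (fun j => cn C j == 0) (iota 0 k)); last first.
  by rewrite -card_ord_count; apply: eq_card => i; rewrite !inE cn_val.
have := count_predC (fun i => 0 < cn C i) (iota 0 k); rewrite size_iota.
rewrite (eq_count (a1 := predC _) (a2 := fun j => cn C j == 0)); last by move=> j /=; lia.
rewrite /hn; lia.
Qed.

Lemma frow_eq C : catalan_path n k lam C -> f_row n k (fT C) = k - hn C 0.
Proof.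
move=> HC.
have He := hn_dec C HC; have HeN := hn_N C HC; have Hel : forall x, x < N -> hn C x <= lamc k lam x.
  by move=> x _; apply: hn_le.
rewrite /f_row (_ : #|_| = count (fun j => ~~ K N k lam (hn C) N j) (iota 0 k)).
  have := count_predC (K N k lam (hn C) N) (iota 0 k); rewrite size_iota.
  rewrite (K_card _ _ _ _ He HeN Hel N (leqnn _)) subnn.
  rewrite (eq_count (a1 := predC _) (a2 := fun j => ~~ K N k lam (hn C) N j)) //; lia.
rewrite -card_ord_count; apply: eq_card => i; rewrite !inE.
have HB := beta_range N k lam (hn C) HeN i 0 (leq0n N); rewrite subn0 in HB.
apply/forallP/idP.
- move=> H; apply/negP => /HB [y [_ yN Hy]]; have := H (Ordinal yN).
  by rewrite ffunE /= Hy.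
- move=> nK j; rewrite ffunE /=; apply/negP => /eqP Hj; move/negP: nK; apply.
  by apply/HB; exists j; split.
Qed.

Lemma fcol_eq C : catalan_path n k lam C ->
  f_col n k (fT C) = count (fun x => hn C x == lamc k lam x) (iota 0 N).
Proof.
move=> HC.
have He := hn_dec C HC; have HeN := hn_N C HC; have Hel : forall x, x < N -> hn C x <= lamc k lam x.
  by move=> x _; apply: hn_le.
rewrite /f_col -card_ord_count; apply: eq_card => x; rewrite !inE.
have HA := col_alpha _ _ _ _ He HeN Hel x (ltn_ord x).
have Hle := hn_le C HC x.
apply/forallP/idP.
- move=> H; rewrite eqn_leq Hle /= leqNgt; apply/negP => /HA [i [ik Hi]].
  by have := H (Ordinal ik); rewrite ffunE /= Hi.
- move=> /eqP Heq i; rewrite ffunE /=; apply/negP => /eqP Hi.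
  have : hn C x < lamc k lam x by apply/HA; exists i.
  by rewrite Heq ltnn.
Qed.

Lemma CxE C X h : catalan_path n k lam C -> 0 < X -> X <= N ->
  (X <= Cx n k C h) = (h <= hn C X.-1).
Proof.
move=> HC X0 XN; case: h => [|h] /=; first by rewrite XN.
change ((X <= cn C h) = (h < hn C X.-1)).
case: (ltnP h k) => hk.
  by rewrite -hn_prefix //; lia.
rewrite cn_ge //; have := hn_lek C X.-1; lia.
Qed.

Lemma lamxE X h : 0 < X -> X <= N ->
  (X <= lamx n k lam h) = (h <= lamc k lam X.-1).
Proof.
move=> X0 XN; rewrite /lamx; case: h => [|h] /=; first by rewrite XN.
case: (ltnP h k) => hk.
  rewrite /lamc -(count_prefix (fun j => X.-1 < lam j)) //; first lia.
  by move=> i j ij jk /=; have := Hlam _ _ ij jk; lia.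
have := count_size (fun i => X.-1 < lam i) (iota 0 k); rewrite size_iota /lamc; lia.
Qed.

Lemma west_eq C : catalan_path n k lam C ->
  west_on_L n k lam C = count (fun x => hn C x == lamc k lam x) (iota 0 N).
Proof.
move=> HC; rewrite /west_on_L.
pose Q h X := [&& Cx n k C h.+1 < X, X <= Cx n k C h, lamx n k lam h.+1 < X & X <= lamx n k lam h].
have E h : #|[set x : 'I_N.+1 | Q h x]| = \sum_(0 <= X < N.+1) (Q h X : nat).
  by rewrite card_ord_count count_sum.
rewrite (eq_bigr _ (fun h _ => E h)) exchange_big_nat.
rewrite (eq_big_nat _ _ (F2 := fun X => ((0 < X) && (hn C X.-1 == lamc k lam X.-1) : nat))); last first.
  move=> X /andP[_ XN].
  case: (posnP X) => [->|X0].
    by rewrite big1 // => h _; rewrite /Q ltn0.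
  rewrite (eq_bigr (fun h => ((h == hn C X.-1) && (h == lamc k lam X.-1) : nat))); last first.
    move=> h _; rewrite /Q !ltnNge !CxE // !lamxE //; try lia.
  rewrite sum_eq1 /=; have := hn_lek C X.-1; case: ltnP => //; lia.
rewrite big_nat_recl //= count_sum; apply: eq_bigr => x _ //.
Qed.

Definition Tn (T : {ffun 'I_k * 'I_N -> option bool}) (i x : nat) : option bool :=
  match @insub _ (fun m => m < k) 'I_k i, @insub _ (fun m => m < N) 'I_N x with
  | Some i', Some x' => T (i', x') | _, _ => None end.

Lemma Tn_val T (i : 'I_k) (x : 'I_N) : Tn T i x = T (i, x).
Proof. by rewrite /Tn !valK. Qed.

Lemma TnE T i x (ik : i < k) (xN : x < N) : Tn T i x = T (Ordinal ik, Ordinal xN).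
Proof. by rewrite /Tn (insubT (fun m => m < k) ik) (insubT (fun m => m < N) xN). Qed.

Lemma TnN T i x : ~~ ((i < k) && (x < N)) -> Tn T i x = None.
Proof.
case/nandP => H; rewrite /Tn.
  by rewrite insubF //; apply/negbTE.
by case: insub => // i'; rewrite insubF //; apply/negbTE.
Qed.

Section Tab.
Variable T : {ffun 'I_k * 'I_N -> option bool}.
Hypothesis HT : catalan_tableau n k lam T.

Lemma TY i x : ~~ [&& i < k, x < N & x < lam i] -> Tn T i x = None.
Proof.
move: HT => /andP[/andP[/andP[Ha _] _] _] H.
case: (boolP ((i < k) && (x < N))) => [/andP[ik xN]|]; last exact: TnN.
rewrite (TnE _ _ _ ik xN); apply/eqP.
have := (forallP Ha) (Ordinal ik, Ordinal xN) => /implyP; apply.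
by rewrite /inY /=; move: H; rewrite ik xN.
Qed.

Lemma Ti i i' x : Tn T i x = Some true -> i' < i -> Tn T i' x = None.
Proof.
move: HT => /andP[/andP[/andP[_ Hb] _] _] H ii'.
case: (boolP ((i < k) && (x < N))) => [/andP[ik xN]|/(TnN T) E]; last by rewrite E in H.
have i'k : i' < k by lia.
rewrite (TnE _ _ _ ik xN) in H; rewrite (TnE _ _ _ i'k xN); apply/eqP.
have := (forallP Hb) (Ordinal ik) => /forallP /(_ (Ordinal xN)) /forallP /(_ (Ordinal i'k)) /implyP.
by apply; rewrite H eqxx /=.
Qed.

Lemma Tii i x x' : Tn T i x = Some false -> x' < x -> Tn T i x' = None.
Proof.
move: HT => /andP[/andP[_ Hc] _] H xx'.
case: (boolP ((i < k) && (x < N))) => [/andP[ik xN]|/(TnN T) E]; last by rewrite E in H.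
have x'N : x' < N by lia.
rewrite (TnE _ _ _ ik xN) in H; rewrite (TnE _ _ _ ik x'N); apply/eqP.
have := (forallP Hc) (Ordinal ik) => /forallP /(_ (Ordinal xN)) /forallP /(_ (Ordinal x'N)) /implyP.
by apply; rewrite H eqxx /=.
Qed.

Lemma Tiii i x : i < k -> x < N -> x < lam i ->
  (forall i', i < i' -> Tn T i' x != Some true) ->
  (forall x', x < x' -> Tn T i x' != Some false) -> Tn T i x != None.
Proof.
move: HT => /andP[_ Hd] ik xN xl Ha' Hb'.
rewrite (TnE _ _ _ ik xN).
have := (forallP Hd) (Ordinal ik) => /forallP /(_ (Ordinal xN)) /implyP; apply.
apply/and3P; split; first by rewrite /inY.
  apply/forallP => i'; apply/implyP => ii'.
  by rewrite -(Tn_val T i' (Ordinal xN)); exact: Ha'.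
apply/forallP => x'; apply/implyP => xx'.
by rewrite -(Tn_val T (Ordinal ik) x'); exact: Hb'.
Qed.

Local Notation eTT := (eT N k (Tn T)).

Lemma eTT_ge x : N <= x -> eTT x = 0.
Proof.
move=> Nx; rewrite /eT (eq_count (a2 := pred0)) ?count_pred0 // => i.
apply/negbTE/hasPn => y; rewrite mem_iota => /andP[_ yN]; rewrite negb_and; lia.
Qed.

Lemma eTT_lek x : eTT x <= k.
Proof. by have := count_size (KTx N (Tn T) x) (iota 0 k); rewrite size_iota. Qed.

Definition gC : {ffun 'I_k -> 'I_N.+1} :=
  [ffun i : 'I_k => inord (count (fun x => i < eTT x) (iota 0 N))].

Lemma cn_gC i : i < k -> cn gC i = count (fun x => i < eTT x) (iota 0 N).
Proof.
move=> ik; have := cn_val gC (Ordinal ik); rewrite ffunE inordK /=.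
  by move=> ->.
by have := count_size (fun x => i < eTT x) (iota 0 N); rewrite size_iota.
Qed.

Lemma eTT_prefix x i : x < N -> (i < eTT x) = (x < count (fun x => i < eTT x) (iota 0 N)).
Proof.
move=> xN; apply: (count_prefix (fun x => i < eTT x)) => // x1 x2 x12 _ /= H.
apply: leq_trans H (sub_count _ _) => j /hasP [y Hy /andP[H1 H2]]; apply/hasP; exists y => //.
by rewrite H2 andbT; lia.
Qed.

Lemma gC_path : catalan_path n k lam gC.
Proof.
apply/andP; split.
  apply/forallP => i; rewrite -cn_val cn_gC //.
  apply: leq_trans (_ : count (fun x => x < lam i) (iota 0 N) <= _).
    apply: sub_count => x /= H.
    case: (ltnP x N) => xN; last by move: H; rewrite eTT_ge.
    have := eT_le _ _ _ _ TY x xN.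
    rewrite /lamc => H2.
    have : i < count (fun j => x < lam j) (iota 0 k) by lia.
    rewrite -count_prefix //; move=> i1 j1 ij jk /=; have := Hlam _ _ ij jk; lia.
  by rewrite count_lt_iota; lia.
apply/forallP => i; apply/forallP => j; apply/implyP => ij.
rewrite -!cn_val !cn_gC //; apply: sub_count => x /=; lia.
Qed.

Lemma hn_gC : hn gC = eTT.
Proof.
apply: functional_extensionality => x.
rewrite /hn (eq_in_count (a2 := fun i => i < eTT x)).
  by rewrite count_lt_iota; have := eTT_lek x; lia.
move=> i; rewrite mem_iota => /andP[_ ik]; rewrite cn_gC //.
case: (ltnP x N) => xN; first by rewrite eTT_prefix.
rewrite eTT_ge //; have := count_size (fun x => i < eTT x) (iota 0 N); rewrite size_iota.
lia.
Qed.

Lemma fT_gC : fT gC = T.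
Proof.
apply/ffunP => -[i x]; rewrite ffunE /= hn_gC -(T_tabn N k lam (Tn T) TY Ti Tii Tiii) //.
by rewrite Tn_val.
Qed.

End Tab.

Lemma gC_fT C : catalan_path n k lam C -> gC (fT C) = C.
Proof.
move=> HC.
have He := hn_dec C HC; have HeN := hn_N C HC; have Hel : forall x, x < N -> hn C x <= lamc k lam x.
  by move=> x _; apply: hn_le.
have E : forall x, x < N -> eT N k (Tn (fT C)) x = hn C x.
  move=> x xN; rewrite /eT -(beta_count N k lam (hn C) He HeN Hel x (ltnW xN)).
  apply: eq_in_count => j; rewrite mem_iota => /andP[_ jk].
  apply: eq_in_has => y; rewrite mem_iota => /andP[_ yN].
  by rewrite (TnE _ _ _ jk yN) ffunE.
apply/ffunP => i; apply: val_inj; rewrite ffunE /= inordK; last first.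
  by have := count_size (fun x => i < eT N k (Tn (fT C)) x) (iota 0 N); rewrite size_iota.
rewrite (eq_in_count (a2 := fun x => x < cn C i)).
  by rewrite count_lt_iota -cn_val; have := cn_N C i; lia.
move=> x; rewrite mem_iota => /andP[_ xN]; rewrite E // hn_prefix //.
Qed.

End Final.

Theorem lemma1 (n k : nat) (lam : nat -> nat) :
  (1 <= k)%N -> (k <= n)%N -> young_shape n k lam ->
  exists f : {C : {ffun 'I_k -> 'I_(n - k).+1} | catalan_path n k lam C} ->
             {T : {ffun 'I_k * 'I_(n - k) -> option bool} | catalan_tableau n k lam T},
    bijective f /\
    forall (R : fieldType) (a b : R), a != 0%R -> b != 0%R ->
      forall C, path_wt n k lam R a b (val C) = tab_wt n k R a b (val (f C)).
Proof.
move=> _ _ [_ Hlam].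
exists (fun C => exist _ (fT n k lam (val C)) (fT_tab n k lam (val C) (valP C))).
split.
  exists (fun T => exist _ (gC n k (val T)) (gC_path n k lam Hlam (val T) (valP T))).
    by move=> C; apply: val_inj => /=; apply: gC_fT (valP C).
  by move=> T; apply: val_inj => /=; apply: fT_gC (valP T).
move=> R a b _ _ C; rewrite /path_wt /tab_wt /=.
rewrite (west_eq n k lam Hlam _ (valP C)) (fcol_eq _ _ _ _ (valP C)).
by rewrite south_eq (frow_eq _ _ _ _ (valP C)).
Qed.
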